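(* Let $\theta\in[0,1]$ and $\psi=\frac12-\frac{\theta}{4}$. On the cycle graph $C_5$, let $X$ be the capture time measured in rounds in the tipsy cop and drunken robber game, and let $\mathbb{E}^i[X]$ be its expectation when the game starts with cop and robber at distance $i\in\{1,2\}$ and the robber moving first. Then \[ \mathbb{E}^1[X]=\frac{1-\frac{\theta}{4}}{\left(1-\frac{\theta}{4}\right)(2-\psi)-1},\qquad \mathbb{E}^2[X]=\frac{1}{\left(1-\frac{\theta}{4}\right)(2-\psi)-1}. \]
   Context: Tipsy cop and drunken robber game on a graph: a cop and a robber occupy distinct vertices and alternate moves, the robber moving first; on each move the mover must move to an adjacent vertex (no staying put). The robber always moves to a uniformly random neighbor. The cop, independently at each of her moves, with probability $\theta$ moves to a uniformly random neighbor and with probability $1-\theta$ moves to a neighbor that decreases her distance to the robber (onto the robber if adjacent). All random choices are independent; the robber is captured (game over) as soon as both occupy the same vertex. A round consists of one robber move followed by one cop move; the capture time in rounds is $X=n$ if the capture occurs during the $n$-th round (i.e. at move $2n-1$ or $2n$). *)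

(* Defs.v *)
From HB Require Import structures.
From mathcomp Require Import all_boot all_order all_algebra.
From mathcomp Require Import all_classical all_reals all_analysis.
Set Implicit Arguments. Unset Strict Implicit. Unset Printing Implicit Defensive.
Import Order.TTheory GRing.Theory Num.Theory.
Local Open Scope ring_scope.

Section TipsyGame.
Variables (R : realType) (V : finType) (adj : rel V).

Fixpoint ball (k : nat) (x : V) : {set V} :=
  if k is k'.+1 then ball k' x :|: [set w | [exists u in ball k' x, adj u w]]
  else [set x].

(* graph distance (= #|V| if y is unreachable from x) *)
Definition gdist (x y : V) : nat := find (fun k => y \in ball k x) (iota 0 #|V|).

Definition deg (v : V) : R := #|[set w | adj v w]|%:R.

Definition greedy (c r : V) : {set V} := [set w | adj c w && (gdist w r < gdist c r)%N].

(* game states (cop vertex, robber vertex) *)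
Definition state := (V * V)%type.

Definition robber_kernel (s t : state) : R :=
  if (t.1 == s.1) && adj s.2 t.2 then (deg s.2)^-1 else 0.

Definition cop_kernel (theta : R) (s t : state) : R :=
  if (t.2 == s.2) && adj s.1 t.1 then
    theta / deg s.1 +
    (if t.1 \in greedy s.1 s.2 then (1 - theta) / #|greedy s.1 s.2|%:R else 0)
  else 0.

Definition step (K : state -> state -> R) (m : {ffun state -> R}) : {ffun state -> R} :=
  [ffun t => \sum_(s : state | s.1 != s.2) m s * K s t].

(* one round: robber move then cop move; mass on captured states is dropped *)
Definition round_step (theta : R) (m : {ffun state -> R}) : {ffun state -> R} :=
  step (cop_kernel theta) (step robber_kernel m).

Definition start_distr (c r : V) : {ffun state -> R} :=
  [ffun s => if s == (c, r) then 1 else 0].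

Definition distr_after (theta : R) (c r : V) (n : nat) : {ffun state -> R} :=
  iter n (round_step theta) (start_distr c r).

(* P(X > n) : no capture during the first n rounds *)
Definition P_gt (theta : R) (c r : V) (n : nat) : R :=
  \sum_(s : state | s.1 != s.2) distr_after theta c r n s.

(* P(X = n) for n >= 1 *)
Definition P_eq (theta : R) (c r : V) (n : nat) : R :=
  P_gt theta c r n.-1 - P_gt theta c r n.

Definition expected_capture_time (theta : R) (c r : V) : \bar R :=
  (\sum_(1 <= n <oo) ((n%:R * P_eq theta c r n)%:E))%E.

End TipsyGame.

Definition c5adj : rel 'I_5 := fun x y =>
  (((x.+1 %% 5)%N == y) || ((y.+1 %% 5)%N == x)).

(* Main.v *)
Require Import Defs.
From HB Require Import structures.
From mathcomp Require Import all_boot all_order all_algebra.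
From mathcomp Require Import all_classical all_reals all_analysis.
From mathcomp Require Import ring lra.
Import Order.TTheory GRing.Theory Num.Theory.
Set Implicit Arguments. Unset Strict Implicit. Unset Printing Implicit Defensive.

Definition L5 : seq 'I_5 :=
  [:: @Ordinal 5 0 erefl; @Ordinal 5 1 erefl; @Ordinal 5 2 erefl;
      @Ordinal 5 3 erefl; @Ordinal 5 4 erefl].
Definition LS : seq (state 'I_5) := [seq (x, y) | x <- L5, y <- L5].

Lemma mem_L5 (x : 'I_5) : x \in L5.
Proof. by case: x => [[|[|[|[|[|k]]]]] Hk]. Qed.

Lemma mem_LS (s : state 'I_5) : s \in LS.
Proof. case: s => x y; exact: allpairs_f (mem_L5 x) (mem_L5 y). Qed.

Lemma perm_L5 : perm_eq (index_enum 'I_5) L5.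
Proof.
apply: uniq_perm; [exact: index_enum_uniq| by [] | move=> x].
by rewrite mem_index_enum mem_L5.
Qed.

Lemma perm_LS : perm_eq (index_enum (state 'I_5)) LS.
Proof.
apply: uniq_perm; [exact: index_enum_uniq| by vm_compute | move=> x].
by rewrite mem_index_enum mem_LS.
Qed.

Fixpoint ballb (k : nat) (x y : 'I_5) : bool :=
  if k is k'.+1 then ballb k' x y || has (fun u => ballb k' x u && c5adj u y) L5
  else y == x.

Lemma ballbS k x y : ballb k.+1 x y = ballb k x y || has (fun u => ballb k x u && c5adj u y) L5.
Proof. by []. Qed.

Lemma ballE k x y : (y \in Defs.ball c5adj k x) = ballb k x y.
Proof.
elim: k y => [|k IH] y; first by rewrite /= inE.
rewrite ballbS [Defs.ball _ _.+1 _]/= finset.in_setU IH inE; congr (_ || _).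
apply/existsP/hasP => [[u /andP[uin auy]]|[u _ /andP[uin auy]]].
  by exists u; [exact: mem_L5| rewrite -IH uin].
by exists u; rewrite IH uin.
Qed.

Definition gdistb (x y : 'I_5) : nat := find (fun k => ballb k x y) (iota 0 5).

Lemma gdistE x y : gdist c5adj x y = gdistb x y.
Proof.
rewrite /gdist /gdistb card_ord; apply: eq_find => k; exact: ballE.
Qed.

Definition Db (s : state 'I_5) := gdistb s.1 s.2.
Definition greedyb (c r w : 'I_5) := c5adj c w && (gdistb w r < gdistb c r)%N.

Lemma greedyE c r w : (w \in greedy c5adj c r) = greedyb c r w.
Proof. by rewrite inE /greedyb !gdistE. Qed.

Lemma F0 : all (fun s : state 'I_5 => (s.1 != s.2) == ((Db s == 1%N) || (Db s == 2%N))) LS.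
Proof. vm_compute. reflexivity. Qed.
Lemma Fdeg : all (fun v => count (c5adj v) L5 == 2%N) L5.
Proof. vm_compute. reflexivity. Qed.
Lemma Fg : all (fun s : state 'I_5 => (s.1 != s.2) ==> (count (greedyb s.1 s.2) L5 == 1%N)) LS.
Proof. vm_compute. reflexivity. Qed.
Definition cR (s : state 'I_5) j := count (fun t : state 'I_5 => (Db t == j) && ((t.1 == s.1) && c5adj s.2 t.2)) LS.
Definition cA (s : state 'I_5) j := count (fun t : state 'I_5 => (Db t == j) && ((t.2 == s.2) && c5adj s.1 t.1)) LS.
Definition cG (s : state 'I_5) j := count (fun t : state 'I_5 => (Db t == j) && (((t.2 == s.2) && c5adj s.1 t.1) && greedyb s.1 s.2 t.1)) LS.
Lemma Fcounts : all (fun s => ((Db s == 1%N) ==> [&& cR s 1 == 0%N, cR s 2 == 1%N, cA s 1 == 0%N, cA s 2 == 1%N, cG s 1 == 0%N & cG s 2 == 0%N])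
   && ((Db s == 2%N) ==> [&& cR s 1 == 1%N, cR s 2 == 1%N, cA s 1 == 1%N, cA s 2 == 1%N, cG s 1 == 1%N & cG s 2 == 0%N])) LS.
Proof. vm_compute. reflexivity. Qed.

Local Open Scope ring_scope.

Section Lump.
Variable R : realType.
Variable theta : R.

Lemma card5 (A : {set 'I_5}) : #|A| = count (mem A) L5.
Proof. by rewrite -sum1_card (perm_big _ perm_L5) sum1_count. Qed.

Lemma deg2 v : deg R c5adj v = 2.
Proof.
rewrite /deg card5 (@eq_count _ _ (c5adj v)); last by move=> w; rewrite /= inE.
by rewrite (eqP (allP Fdeg v (mem_L5 v))).
Qed.

Lemma sum_if_count (P b : pred (state 'I_5)) (a : R) :
  \sum_(t | P t) (if b t then a else 0) = a *+ count (fun t => P t && b t) LS.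
Proof. by rewrite (perm_big _ perm_LS) -big_mkcondr big_const_seq iter_addr addr0. Qed.

Lemma robber_sum s j :
  \sum_(t | Db t == j) robber_kernel R c5adj s t = 2^-1 *+ cR s j.
Proof.
rewrite -sum_if_count; apply: eq_bigr => t _.
by rewrite /robber_kernel deg2.
Qed.

Lemma cop_sum s j :
  \sum_(t | Db t == j) cop_kernel c5adj theta s t =
  (theta / 2) *+ cA s j + ((1 - theta) / #|greedy c5adj s.1 s.2|%:R) *+ cG s j.
Proof.
rewrite /cA /cG -!sum_if_count -big_split /=; apply: eq_bigr => t _.
rewrite /cop_kernel deg2 greedyE.
case: ((t.2 == s.2) && c5adj s.1 t.1) => /=; last by rewrite addr0.
by case: (greedyb s.1 s.2 t.1); rewrite ?addr0.
Qed.

Definition L (j : nat) (m : {ffun state 'I_5 -> R}) := \sum_(s | Db s == j) m s.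

Lemma split_unc (F : state 'I_5 -> R) :
  \sum_(s | s.1 != s.2) F s = \sum_(s | Db s == 1%N) F s + \sum_(s | Db s == 2%N) F s.
Proof.
rewrite (bigID (fun s => Db s == 1%N)) /=; congr (_ + _); apply: eq_bigl => s;
by rewrite (eqP (allP F0 s (mem_LS s))); case: (Db s) => [|[|[|n]]].
Qed.

Lemma sum_step (K : state 'I_5 -> state 'I_5 -> R) (m : {ffun state 'I_5 -> R}) (P : pred (state 'I_5)) :
  \sum_(t | P t) step K m t = \sum_(s | s.1 != s.2) m s * \sum_(t | P t) K s t.
Proof.
under eq_bigr do rewrite ffunE.
by rewrite exchange_big /=; apply: eq_bigr => s _; rewrite mulr_sumr.
Qed.

Lemma lump (K : state 'I_5 -> state 'I_5 -> R) (m : {ffun state 'I_5 -> R}) j (k1 k2 : R) :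
  (forall s, Db s == 1%N -> \sum_(t | Db t == j) K s t = k1) ->
  (forall s, Db s == 2%N -> \sum_(t | Db t == j) K s t = k2) ->
  L j (step K m) = k1 * L 1 m + k2 * L 2 m.
Proof.
move=> H1 H2; rewrite /L sum_step split_unc !mulr_sumr; congr (_ + _);
  apply: eq_bigr => s Hs; by rewrite (H1 s Hs) + rewrite (H2 s Hs); rewrite mulrC.
Qed.

Lemma cnt1 s : Db s == 1%N ->
  [&& cR s 1 == 0%N, cR s 2 == 1%N, cA s 1 == 0%N, cA s 2 == 1%N, cG s 1 == 0%N & cG s 2 == 0%N].
Proof.
move=> Hs; have := allP Fcounts s (mem_LS s); rewrite (eqP Hs) /=.
by rewrite andbT.
Qed.

Lemma cnt2 s : Db s == 2%N ->
  [&& cR s 1 == 1%N, cR s 2 == 1%N, cA s 1 == 1%N, cA s 2 == 1%N, cG s 1 == 1%N & cG s 2 == 0%N].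
Proof.
by move=> Hs; have := allP Fcounts s (mem_LS s); rewrite (eqP Hs) /=.
Qed.

Lemma greedy1 s : Db s == 2%N -> #|greedy c5adj s.1 s.2| = 1%N.
Proof.
move=> Hs; have Hu : s.1 != s.2.
  by rewrite (eqP (allP F0 s (mem_LS s))) Hs orbT.
rewrite card5 (@eq_count _ _ (greedyb s.1 s.2)); last by move=> w; rewrite /= greedyE.
by have := allP Fg s (mem_LS s); rewrite Hu => /eqP.
Qed.

Lemma round1 (m : {ffun state 'I_5 -> R}) : L 1 (round_step c5adj theta m) =
  (1 - theta / 2) * (L 1 m / 2 + L 2 m / 2).
Proof.
rewrite /round_step (@lump _ _ _ 0 (1 - theta/2)); first last.
- move=> s Hs; rewrite cop_sum greedy1 //.
  by case/and5P: (cnt2 Hs) => _ _ /eqP-> _ /andP[/eqP-> _]; rewrite !mulr1n; field.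
- by move=> s Hs; rewrite cop_sum; case/and5P: (cnt1 Hs) => _ _ /eqP-> _ /andP[/eqP-> _]; rewrite !mulr0n addr0.
rewrite (@lump _ _ _ 0 (2^-1)); first last.
- by move=> s Hs; rewrite robber_sum; case/and5P: (cnt2 Hs) => /eqP-> _ _ _ /andP[_ _].
- by move=> s Hs; rewrite robber_sum; case/and5P: (cnt1 Hs) => /eqP-> _ _ _ /andP[_ _].
rewrite (@lump _ _ _ (2^-1) (2^-1)); first last.
- by move=> s Hs; rewrite robber_sum; case/and5P: (cnt2 Hs) => _ /eqP-> _ _ /andP[_ _].
- by move=> s Hs; rewrite robber_sum; case/and5P: (cnt1 Hs) => _ /eqP-> _ _ /andP[_ _].
by field.
Qed.

Lemma round2 (m : {ffun state 'I_5 -> R}) : L 2 (round_step c5adj theta m) =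
  theta / 4 * L 1 m + theta / 2 * L 2 m.
Proof.
rewrite /round_step (@lump _ _ _ (theta/2) (theta/2)); first last.
- move=> s Hs; rewrite cop_sum.
  by case/and5P: (cnt2 Hs) => _ _ _ /eqP-> /andP[_ /eqP->]; rewrite mulr1n mulr0n addr0.
- by move=> s Hs; rewrite cop_sum; case/and5P: (cnt1 Hs) => _ _ _ /eqP-> /andP[_ /eqP->]; rewrite mulr1n mulr0n addr0.
rewrite (@lump _ _ _ 0 (2^-1)); first last.
- by move=> s Hs; rewrite robber_sum; case/and5P: (cnt2 Hs) => /eqP-> _ _ _ /andP[_ _].
- by move=> s Hs; rewrite robber_sum; case/and5P: (cnt1 Hs) => /eqP-> _ _ _ /andP[_ _].
rewrite (@lump _ _ _ (2^-1) (2^-1)); first last.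
- by move=> s Hs; rewrite robber_sum; case/and5P: (cnt2 Hs) => _ /eqP-> _ _ /andP[_ _].
- by move=> s Hs; rewrite robber_sum; case/and5P: (cnt1 Hs) => _ /eqP-> _ _ /andP[_ _].
by field.
Qed.

End Lump.

Import numFieldNormedType.Exports.
Local Open Scope classical_set_scope.
Local Open Scope ring_scope.

Section Main.
Variable R : realType.
Variable theta : R.
Hypothesis th0 : 0 <= theta.
Hypothesis th1 : theta <= 1.
Variables c r : 'I_5.

Definition a n := L 1 (distr_after c5adj theta c r n).
Definition b n := L 2 (distr_after c5adj theta c r n).

Lemma a_rec n : a n.+1 = (1 - theta / 2) * (a n / 2 + b n / 2).
Proof. by rewrite /a /distr_after iterS round1. Qed.
Lemma b_rec n : b n.+1 = theta / 4 * a n + theta / 2 * b n.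
Proof. by rewrite /b /distr_after iterS round2. Qed.

Lemma Pgt_ab n : P_gt c5adj theta c r n = a n + b n.
Proof. by rewrite /P_gt split_unc. Qed.

Lemma L_start j : L j (start_distr R c r) = if Db (c, r) == j then 1 else 0.
Proof.
rewrite /L big_mkcond /= (bigD1 (c, r)) //= big1 => [|s Hs]; rewrite ffunE.
  by rewrite eqxx addr0; case: ifP.
by rewrite (negbTE Hs); case: ifP.
Qed.

Lemma ab_ge0 n : 0 <= a n /\ 0 <= b n.
Proof.
have t0 := th0; have t1 := th1.
elim: n => [|n [ha hb]].
  by rewrite /a /b /distr_after /= !L_start; split; case: ifP.
rewrite a_rec b_rec; split.
  by apply: mulr_ge0; lra.
by apply: addr_ge0; apply: mulr_ge0; lra.
Qed.

Lemma ab_decay n : a n + b n <= (3/4) ^+ n.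
Proof.
have t0 := th0; have t1 := th1.
elim: n => [|n IH].
  rewrite /a /b /distr_after /= !L_start expr0.
  case E1: (Db (c, r) == 1%N); case E2: (Db (c, r) == 2%N); try lra.
  by rewrite (eqP E1) in E2.
have [ha hb] := ab_ge0 n.
have h : 0 <= b n * (1 - theta) by apply: mulr_ge0; lra.
rewrite a_rec b_rec exprS.
have : 3/4 * (a n + b n) <= 3/4 * (3/4) ^+ n by rewrite ler_pM2l //; lra.
nra.
Qed.


Definition pp := 1 - theta / 2.
Definition qq := theta / 2.
Definition v1 := 2 * (2 - qq) / (pp * (2 + qq)).
Definition v2 := 4 / (pp * (2 + qq)).
Definition Phi n := v1 * a n + v2 * b n.

Lemma pp_gt0 : 0 < pp. Proof. have t0 := th0; have t1 := th1. rewrite /pp; lra. Qed.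
Lemma qq_ge0 : 0 <= qq. Proof. have t0 := th0; have t1 := th1. rewrite /qq; lra. Qed.
Lemma den_gt0 : 0 < pp * (2 + qq).
Proof. have := pp_gt0; have := qq_ge0 => h1 h2; apply: mulr_gt0 => //; lra. Qed.

Lemma v1_ge0 : 0 <= v1.
Proof.
have := qq_ge0; have := den_gt0 => h1 h2; have t1 := th1.
rewrite /v1; apply: divr_ge0; last exact: ltW.
apply: mulr_ge0 => //; rewrite /qq; lra.
Qed.
Lemma v2_ge0 : 0 <= v2.
Proof. have := den_gt0 => h1; rewrite /v2; apply: divr_ge0 => //; exact: ltW. Qed.

Lemma Phi_S n : Phi n.+1 = Phi n - (a n + b n).
Proof.
have h := den_gt0; have hp := pp_gt0.
rewrite /Phi a_rec b_rec /v1 /v2.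
move: h hp; rewrite /pp /qq => h hp.
field; have t0 := th0; have t1 := th1; apply/andP; split; apply/negP => /eqP; lra.
Qed.

Definition T N := \sum_(1 <= n < N) n%:R * P_eq c5adj theta c r n.

Lemma T_S N : T N.+1 = Phi 0 - Phi N - N%:R * (a N + b N).
Proof.
elim: N => [|N IH]; first by rewrite /T big_geq // mul0r !subrr.
rewrite /T big_nat_recr //= -/(T N.+1) IH /P_eq /= !Pgt_ab Phi_S -[N.+1%:R]natr1.
ring.
Qed.

Lemma pow_le n : (3/4 : R) ^+ n <= (7/8) ^+ n.
Proof. by apply: lerXn2r; rewrite ?nnegrE //; lra. Qed.

Lemma nbound n : n%:R * (3/4 : R) ^+ n <= 6 * (7/8) ^+ n.
Proof.
elim: n => [|n IH]; first by rewrite mul0r; apply: mulr_ge0 => //; apply: exprn_ge0; lra.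
have := pow_le n; rewrite -[n.+1%:R]natr1 !exprS => h.
have h0 : 0 <= (3/4 : R) ^+ n by apply: exprn_ge0; lra.
have -> : (n%:R + 1) * (3 / 4 * (3 / 4) ^+ n) = 3/4 * (n%:R * (3/4 : R) ^+ n) + 3/4 * (3/4) ^+ n by ring.
lra.
Qed.

Definition Cst := v1 + v2 + 6.

Lemma rest_bound n : 0 <= Phi n + n%:R * (a n + b n) <= Cst * (7/8) ^+ n.
Proof.
have [ha hb] := ab_ge0 n; have hd := ab_decay n; have hv1 := v1_ge0; have hv2 := v2_ge0.
have hn := nbound n; have hp := pow_le n.
have h0 : 0 <= (n%:R : R) by [].
have h1 : 0 <= (3/4 : R) ^+ n by apply: exprn_ge0; lra.
have e1 : v1 * a n <= v1 * (3/4) ^+ n by apply: ler_wpM2l => //; lra.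
have e2 : v2 * b n <= v2 * (3/4) ^+ n by apply: ler_wpM2l => //; lra.
have e3 : n%:R * (a n + b n) <= n%:R * (3/4) ^+ n by apply: ler_wpM2l.
have e4 : (v1 + v2) * (3/4) ^+ n <= (v1 + v2) * (7/8) ^+ n by apply: ler_wpM2l => //; lra.
apply/andP; split; rewrite /Phi /Cst.
  by apply: addr_ge0; [apply: addr_ge0; apply: mulr_ge0|apply: mulr_ge0 => //; lra].
nra.
Qed.

Lemma T_cvg : T @ \oo --> Phi 0.
Proof.
have Hr : (fun n => Phi n + n%:R * (a n + b n)) @ \oo --> (0 : R).
  apply: (@squeeze_cvgr _ _ _ _ (fun _ => 0) (geometric Cst (7/8))).
  - by apply: nearW => n; exact: rest_bound.
  - exact: cvg_cst.
  - by apply: cvg_geometric; rewrite ger0_norm; lra.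
have E : [sequence T n.+1]_n = (fun n => Phi 0 - (Phi n + n%:R * (a n + b n))).
  by apply: boolp.funext => n /=; rewrite T_S; ring.
have H2 : [sequence T n.+1]_n @ \oo --> Phi 0 - 0.
  by rewrite E; apply: cvgB; [exact: cvg_cst | exact: Hr].
rewrite subr0 in H2.
by move: H2; rewrite cvg_shiftS.
Qed.


Lemma ECT : expected_capture_time c5adj theta c r = (Phi 0)%:E.
Proof.
rewrite /expected_capture_time.
rewrite (_ : (fun N => _) = EFin \o T); last first.
  by apply: boolp.funext => N /=; rewrite sumEFin.
rewrite EFin_lim; last by apply/cvg_ex; exists (Phi 0); exact: T_cvg.
by rewrite (cvg_lim _ T_cvg).
Qed.

Lemma Phi0E : Phi 0 = (if Db (c, r) == 1%N then v1 else 0) + (if Db (c, r) == 2%N then v2 else 0).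
Proof.
rewrite /Phi /a /b /distr_after /= !L_start.
by case: ifP; case: ifP; rewrite ?mulr1 ?mulr0.
Qed.

End Main.

Local Close Scope classical_set_scope.
Local Open Scope ring_scope.
Unset Implicit Arguments.
Theorem mainTheorem10 (R : realType) (theta : R) (c r : 'I_5) :
  0 <= theta <= 1 ->
  let psi := 1 / 2 - theta / 4 in
  (gdist c5adj c r = 1%N ->
     expected_capture_time c5adj theta c r =
       ((1 - theta / 4) / ((1 - theta / 4) * (2 - psi) - 1))%:E) /\
  (gdist c5adj c r = 2%N ->
     expected_capture_time c5adj theta c r =
       (1 / ((1 - theta / 4) * (2 - psi) - 1))%:E).
Proof.
move=> /andP[t0 t1] psi; rewrite /psi.
have hp : 0 < 1 - theta / 2 by lra.
have hd : (1 - theta / 4) * (2 - (1 / 2 - theta / 4)) - 1 != 0.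
  have -> : (1 - theta / 4) * (2 - (1 / 2 - theta / 4)) - 1 = (1 - theta / 2) * (2 + theta / 2) / 4 by field.
  rewrite gt_eqF //; apply: divr_gt0 => //; apply: mulr_gt0 => //; lra.
have h4 : 4 + theta != 0 by rewrite gt_eqF //; lra.
have h2 : 2 - theta != 0 by rewrite gt_eqF //; lra.
split => Hd; rewrite ECT // Phi0E // /Db /= -gdistE Hd /=; congr EFin;
  rewrite ?addr0 ?add0r /v1 /v2 /pp /qq; field; rewrite ?h4 ?h2 ?andbT //;
  rewrite gt_eqF //; nra.
Qed.
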